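(* Let $1\leq\ell<d\leq k-1$ be integers with $k-\ell$ not dividing $k$. Then $\delta_d^{\mathrm{hf}}(k,\ell)=\delta_d^{\mathrm{frct}}(k,\ell)$.
   Context: A $k$-graph $G$ has vertex set $V(G)$ and edges that are $k$-subsets. For $0\le\ell<k$, a ($k$-uniform) $\ell$-cycle is a $k$-graph whose vertices can be cyclically ordered so that every edge consists of $k$ cyclically consecutive vertices and consecutive edges intersect in exactly $\ell$ vertices. For $1\le d<k$, $\delta_d(G)$ is the largest $m$ such that every $d$-set lies in at least $m$ edges. A homomorphism $F\to G$ is a vertex map sending edges to edges; a perfect fractional $\ell$-cycle tiling of $G$ is a weighting $\omega(\phi)\in[0,1]$ of homomorphisms $\phi$ from $k$-uniform $\ell$-cycles into $G$ (finitely many nonzero) with $\sum_\phi\omega(\phi)|\phi^{-1}(v)|=1$ for all $v$. The $\ell$-line graph of $G$ has vertex set $E(G)$ with $e\sim f$ iff $|e\cap f|\ge\ell$; a subgraph is $\ell$-connected if it has no isolated vertices and its edges induce a connected subgraph of the $\ell$-line graph; an $\ell$-component is an edge-maximal $\ell$-connected subgraph. A family $\mathcal{G}$ of $k$-graphs admits a Hamilton $\ell$-framework if for every $G\in\mathcal{G}$ there is a spanning subgraph $F(G)\subseteq G$ such that (F1) $F(G)$ is an $\ell$-component of $G$; (F2) $F(G)$ has a perfect fractional $\ell$-cycle tiling; (F3) $F(H-x)\cup F(H-y)$ is $\ell$-connected for every $k$-graph $H$ and $x,y\in V(H)$ with $H-x,H-y\in\mathcal{G}$. The threshold $\delta_d^{\mathrm{hf}}(k,\ell)$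 is the infimum of $\delta\in[0,1]$ such that for every $\varepsilon>0$ there is $n_0$ such that the family of all $k$-graphs $G$ on $n\ge n_0$ vertices, $n$ divisible by $k-\ell$, with $\delta_d(G)\ge(\delta+\varepsilon)\binom{n-d}{k-d}$ admits a Hamilton $\ell$-framework. The threshold $\delta_d^{\mathrm{frct}}(k,\ell)$ is the infimum of $\delta\in[0,1]$ such that for every $\varepsilon>0$ there is $n_0$ such that every $k$-graph on $n\ge n_0$ vertices with $\delta_d(G)\ge(\delta+\varepsilon)\binom{n-d}{k-d}$ has a perfect fractional $\ell$-cycle tiling. *)

(* Defs.v *)
From HB Require Import structures.
From mathcomp Require Import all_boot all_order all_algebra.
From mathcomp Require Import finmap.
From mathcomp Require Import reals.
From Stdlib Require Import Relations.

Set Implicit Arguments.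
Unset Strict Implicit.
Unset Printing Implicit Defensive.

Import Order.TTheory GRing.Theory Num.Theory.
Local Open Scope fset_scope.
Local Open Scope ring_scope.

Record hgraph := HGraph { verts : {fset nat}; hedges : {fset {fset nat}} }.

Definition is_kgraph (k : nat) (G : hgraph) : Prop :=
  forall e, e \in hedges G -> e `<=` verts G /\ #|` e| = k.

Definition subgraph (H G : hgraph) : Prop :=
  verts H `<=` verts G /\ hedges H `<=` hedges G.

Definition spanning_subgraph (H G : hgraph) : Prop :=
  subgraph H G /\ verts H = verts G.

Definition del_vertex (G : hgraph) (x : nat) : hgraph :=
  HGraph (verts G `\ x) [fset e in hedges G | x \notin e].

Definition hunion (G H : hgraph) : hgraph :=
  HGraph (verts G `|` verts H) (hedges G `|` hedges H).

Definition hdeg (G : hgraph) (S : {fset nat}) : nat :=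
  #|` [fset e in hedges G | S `<=` e]|.

Definition mindeg_ge {R : realType} (G : hgraph) (d : nat) (x : R) : Prop :=
  forall S : {fset nat}, S `<=` verts G -> #|` S| = d -> x <= (hdeg G S)%:R.

Definition lline_adj (l : nat) (E : {fset {fset nat}}) (e f : {fset nat}) : Prop :=
  e \in E /\ f \in E /\ (l <= #|` e `&` f|)%N.

Definition lconnected (l : nat) (H : hgraph) : Prop :=
  (forall v, v \in verts H -> exists2 e, e \in hedges H & v \in e) /\
  (forall e f, e \in hedges H -> f \in hedges H ->
     clos_refl_trans _ (lline_adj l (hedges H)) e f).

Definition lcomponent (l : nat) (C G : hgraph) : Prop :=
  subgraph C G /\ lconnected l C /\
  (forall C', subgraph C' G -> lconnected l C' ->
     hedges C `<=` hedges C' -> hedges C' = hedges C).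

(** The k-uniform l-cycle with [m] edges, on vertex set {0, ..., m(k-l)-1}
    in cyclic order; its i-th edge is the window of k cyclically consecutive
    vertices starting at i(k-l). *)
Definition cyc_window (k l m i : nat) : {fset nat} :=
  [fset ((i * (k - l) + j) %% (m * (k - l)))%N | j in iota 0 k].

Definition lcycle (k l m : nat) : hgraph :=
  HGraph [fset j | j in iota 0 (m * (k - l))%N]
         [fset cyc_window k l m i | i in iota 0 m]%N.

(** The numbers of edges [m] for which [lcycle k l m] is an l-cycle, i.e.
    consecutive edges intersect in exactly l vertices (and edges have k
    vertices): this holds iff m >= 1 and m(k-l) >= 2k-l. *)
Definition lcycle_len_ok (k l m : nat) : Prop :=
  (0 < m)%N /\ (2 * k - l <= m * (k - l))%N.

(** A homomorphism from an l-cycle into [G], encoded by the sequence [s] of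
    images of the cycle vertices 0, ..., m(k-l)-1. *)
Definition cycle_hom (k l : nat) (G : hgraph) (s : seq nat) : Prop :=
  exists m, lcycle_len_ok k l m /\ size s = (m * (k - l))%N /\
    forall e, e \in hedges (lcycle k l m) ->
      [fset nth 0%N s i | i in e] \in hedges G.

Definition perfect_frac_tiling {R : realType} (k l : nat) (G : hgraph) : Prop :=
  exists T : seq (seq nat * R),
    uniq (map fst T) /\
    (forall p, p \in T -> cycle_hom k l G p.1 /\ 0 <= p.2 <= 1) /\
    (forall v, v \in verts G ->
       \sum_(p <- T) p.2 * (count_mem v p.1)%:R = 1).

Definition admits_ham_framework {R : realType} (k l : nat) (fam : hgraph -> Prop) : Prop :=
  exists F : hgraph -> hgraph,
    (forall G, fam G ->
       spanning_subgraph (F G) G /\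
       lcomponent l (F G) G /\
       @perfect_frac_tiling R k l (F G)) /\
    (forall H x y, is_kgraph k H -> x \in verts H -> y \in verts H ->
       fam (del_vertex H x) -> fam (del_vertex H y) ->
       lconnected l (hunion (F (del_vertex H x)) (F (del_vertex H y)))).

Definition hf_family {R : realType} (k l d n0 : nat) (delta eps : R) (G : hgraph) : Prop :=
  is_kgraph k G /\ (n0 <= #|` verts G|)%N /\ ((k - l) %| #|` verts G|)%N /\
  mindeg_ge G d ((delta + eps) * ('C(#|` verts G| - d, k - d))%:R).

Definition hf_admissible {R : realType} (k l d : nat) (delta : R) : Prop :=
  0 <= delta <= 1 /\
  forall eps : R, 0 < eps -> exists n0 : nat,
    @admits_ham_framework R k l (hf_family k l d n0 delta eps).

Definition frct_admissible {R : realType} (k l d : nat) (delta : R) : Prop :=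
  0 <= delta <= 1 /\
  forall eps : R, 0 < eps -> exists n0 : nat,
    forall G, is_kgraph k G -> (n0 <= #|` verts G|)%N ->
      mindeg_ge G d ((delta + eps) * ('C(#|` verts G| - d, k - d))%:R) ->
      @perfect_frac_tiling R k l G.

Definition hf_threshold (R : realType) (k l d : nat) : R :=
  inf (fun delta : R => @hf_admissible R k l d delta).

Definition frct_threshold (R : realType) (k l d : nat) : R :=
  inf (fun delta : R => @frct_admissible R k l d delta).

(* Main.v *)
Require Import Defs.
From HB Require Import structures.
From mathcomp Require Import all_boot all_order all_algebra.
From mathcomp Require Import finmap reals.
From mathcomp Require Import zify ring lra.
From Stdlib Require Import Relations.
Set Implicit Arguments.
Unset Strict Implicit.
Unset Printing Implicit Defensive.
Import Order.TTheory GRing.Theory Num.Theory.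
Local Open Scope fset_scope.

Lemma ext_subset (V : {fset nat}) (d : nat) : forall A : {fset nat},
  A `<=` V -> (#|`A| <= d)%N -> (d <= #|`V|)%N ->
  exists S : {fset nat}, A `<=` S /\ S `<=` V /\ #|`S| = d.
Proof.
move=> A; move e: (d - #|`A|)%N => m; elim: m A e => [|m IH] A e AV hA hV.
  by exists A; split=> //; split=> //; lia.
have : ~~ (V `<=` A).
  apply/negP=> VA; have := fsubset_leq_card VA; lia.
case/fsubsetPn=> x xV xA.
have [S [h1 [h2 h3]]] : exists S, x |` A `<=` S /\ S `<=` V /\ #|`S| = d.
  apply: IH => //.
  - rewrite cardfsU1 xA /=; set a := #|` A| in e hA *; lia.
  - by rewrite fsubUset fsub1set xV AV.
  - rewrite cardfsU1 xA /=; set a := #|` A| in e hA *; lia.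
exists S; split=> //; apply: fsubset_trans h1; exact: fsubsetU1.
Qed.

Definition dadj (l d : nat) (W : {fset nat}) (A B : {fset nat}) : Prop :=
  A `<=` W /\ B `<=` W /\ #|`A| = d /\ #|`B| = d /\ (l <= #|`A `&` B|)%N.

Lemma exch (l d : nat) (W : {fset nat}) : (l < d)%N -> forall S T : {fset nat},
  S `<=` W -> T `<=` W -> #|`S| = d -> #|`T| = d ->
  clos_refl_trans _ (dadj l d W) S T.
Proof.
move=> ld S T; move e: #|`S `\` T| => m; elim: m S e => [|m IH] S e SW TW hS hT.
  have ST : S `<=` T by rewrite -fsetD_eq0 -cardfs_eq0 e.
  have : S == T by rewrite eqEfcard ST hS hT leqnn.
  by move/eqP->; apply: rt_refl.
have [a aS aT] : exists2 a, a \in S & a \notin T.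
  apply/fsubsetPn; apply/negP; rewrite -fsetD_eq0 => /eqP ST.
  by move: e; rewrite ST cardfs0.
have [b bT bS] : exists2 b, b \in T & b \notin S.
  apply/fsubsetPn; apply/negP=> TS.
  have : T == S by rewrite eqEfcard TS hS hT leqnn.
  by move/eqP=> TSe; move: aT; rewrite TSe aS.
set S' := b |` (S `\ a).
have hSa : #|`S `\ a| = d.-1 by move: (cardfsD1 a S); rewrite aS hS /=; lia.
have bSa : b \notin S `\ a by rewrite in_fsetD1 (negbTE bS) andbF.
have hS' : #|`S'| = d by rewrite cardfsU1 bSa hSa /=; lia.
have S'W : S' `<=` W.
  rewrite fsubUset fsub1set (fsubsetP TW _ bT) /=.
  apply: fsubset_trans SW; exact: fsubsetDl.
apply: rt_trans (_ : clos_refl_trans _ _ S' T).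
  apply: rt_step; split=> //; split=> //; split=> //; split=> //.
  have : S `\ a `<=` S `&` S'.
    by rewrite fsubsetI fsubsetDl fsubsetU1.
  move/fsubset_leq_card; rewrite hSa; lia.
apply: IH => //.
have -> : S' `\` T = (S `\` T) `\ a.
  apply/fsetP=> z; rewrite !inE.
  case: (z =P b) => [->|_]; rewrite ?bT /= ?andbF //.
  by case: (z \in T); case: (z == a).

move: (cardfsD1 a (S `\` T)); rewrite in_fsetD aS aT e /=; lia.
Qed.
Lemma crt_mono (T : Type) (R1 R2 : relation T) : (forall a b, R1 a b -> R2 a b) ->
  forall a b, clos_refl_trans _ R1 a b -> clos_refl_trans _ R2 a b.
Proof.
move=> h a b; elim=> [x y /h|x|x y z _ IH1 _ IH2]; [exact: rt_step|exact: rt_refl|].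
exact: rt_trans IH1 IH2.
Qed.

Lemma edges_conn (l : nat) (E : {fset {fset nat}}) (Good : {fset nat} -> Prop) :
  (forall S, Good S -> (l <= #|`S|)%N) ->
  (forall S, Good S -> exists2 g, g \in E & S `<=` g) ->
  (forall e, e \in E -> exists2 S, Good S & S `<=` e) ->
  (forall S T, Good S -> Good T -> clos_refl_trans _
     (fun A B => Good A /\ Good B /\ (l <= #|`A `&` B|)%N) S T) ->
  forall e f, e \in E -> f \in E -> clos_refl_trans _ (lline_adj l E) e f.
Proof.
move=> h0 h1 h2 h3.
have adj : forall e f A B, e \in E -> f \in E -> A `<=` e -> B `<=` f ->
    (l <= #|`A `&` B|)%N -> lline_adj l E e f.
  move=> e f A B eE fE Ae Bf hl; split=> //; split=> //.
  apply: leq_trans hl _; apply: fsubset_leq_card; exact: fsetISS.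
have key : forall S T, clos_refl_trans_1n _
     (fun A B => Good A /\ Good B /\ (l <= #|`A `&` B|)%N) S T -> Good S ->
     forall e f, e \in E -> f \in E -> S `<=` e -> T `<=` f ->
     clos_refl_trans _ (lline_adj l E) e f.
  move=> S T; elim=> [A|A B C [_ [GB hAB]] _ IH] GA e f eE fE Ae Af.
    apply: rt_step; apply: (adj e f A A) => //; rewrite fsetIid; exact: h0.
  have [g gE Bg] := h1 B GB.
  apply: rt_trans (_ : clos_refl_trans _ _ g f); last exact: IH.
  apply: rt_step; exact: (adj e g A B).
move=> e f eE fE.
have [S GS Se] := h2 e eE; have [T GT Tf] := h2 f fE.
apply: (key S T) => //; apply: clos_rt_rt1n; exact: h3.
Qed.

Definition dcover (d : nat) (G : hgraph) : Prop :=
  forall S, S `<=` verts G -> #|`S| = d -> exists2 e, e \in hedges G & S `<=` e.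

Lemma lconn_union (k l d : nat) (G1 G2 : hgraph) : (l < d)%N -> (d <= k)%N ->
  is_kgraph k G1 -> is_kgraph k G2 -> dcover d G1 -> dcover d G2 ->
  (d <= #|`verts G1|)%N -> (d <= #|`verts G2|)%N ->
  (exists U, U `<=` verts G1 `&` verts G2 /\ #|`U| = d) ->
  lconnected l (hunion G1 G2).
Proof.
move=> ld dk k1 k2 c1 c2 n1 n2 [U [UV hU]].
have vert : forall G, dcover d G -> (d <= #|`verts G|)%N -> forall v, v \in verts G ->
    exists2 e, e \in hedges G & v \in e.
  move=> G cG nG v vV.
  have [S [vS [SV hS]]] : exists S, [fset v] `<=` S /\ S `<=` verts G /\ #|`S| = d.
    apply: ext_subset => //; [by rewrite fsub1set | by rewrite cardfs1; lia].
  have [e eE Se] := cG S SV hS; exists e => //.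
  by apply: (fsubsetP Se); rewrite -fsub1set.
split.
  move=> v; rewrite /= in_fsetU => /orP [] vV.
    by have [e eE ve] := vert _ c1 n1 v vV; exists e => //; rewrite /= in_fsetU eE.
  by have [e eE ve] := vert _ c2 n2 v vV; exists e => //; rewrite /= in_fsetU eE orbT.
move=> e f eE fE.
pose Good S := (S `<=` verts G1 \/ S `<=` verts G2) /\ #|`S| = d.
apply: (edges_conn (Good := Good)) => //.
- by move=> S [_ ->]; lia.
- move=> S [[SV|SV] hS].
    by have [g gE Sg] := c1 S SV hS; exists g => //; rewrite /= in_fsetU gE.
  by have [g gE Sg] := c2 S SV hS; exists g => //; rewrite /= in_fsetU gE orbT.
- move=> g; rewrite /= in_fsetU => /orP [] gE.
    have [gV hg] := k1 g gE.
    have := @ext_subset g d fset0 (fsub0set _) (leq0n _); rewrite hg => /(_ dk) [S [_ [Sg hS]]].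
    by exists S => //; split => //; left; exact: fsubset_trans Sg gV.
  have [gV hg] := k2 g gE.
  have := @ext_subset g d fset0 (fsub0set _) (leq0n _); rewrite hg => /(_ dk) [S [_ [Sg hS]]].
  by exists S => //; split => //; right; exact: fsubset_trans Sg gV.
have lift : forall W, (W `<=` verts G1 \/ W `<=` verts G2) -> forall S T,
    S `<=` W -> T `<=` W -> #|`S| = d -> #|`T| = d ->
    clos_refl_trans _ (fun A B => Good A /\ Good B /\ (l <= #|`A `&` B|)%N) S T.
  move=> W hW S T SW TW hS hT.
  apply: crt_mono (exch ld SW TW hS hT) => A B [AW [BW [hA [hB hAB]]]].
  split; last split=> //.
    by split=> //; case: hW => hW; [left|right]; exact: fsubset_trans AW hW.
  by split=> //; case: hW => hW; [left|right]; exact: fsubset_trans BW hW.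
have U1 : U `<=` verts G1 := fsubset_trans UV (fsubsetIl _ _).
have U2 : U `<=` verts G2 := fsubset_trans UV (fsubsetIr _ _).
move=> S T [[S1|S2] hS] [[T1|T2] hT].
- by apply: (lift (verts G1)) => //; left.
- apply: rt_trans (_ : clos_refl_trans _ _ U T).
    by apply: (lift (verts G1)) => //; left.
  by apply: (lift (verts G2)) => //; right.
- apply: rt_trans (_ : clos_refl_trans _ _ U T).
    by apply: (lift (verts G2)) => //; right.
  by apply: (lift (verts G1)) => //; left.
- by apply: (lift (verts G2)) => //; right.
Qed.
Local Open Scope ring_scope.

Lemma mindeg_cover (R : realType) (G : hgraph) (d : nat) (x : R) :
  0 < x -> mindeg_ge G d x -> dcover d G.
Proof.
move=> x0 hm S SV hS.
have := hm S SV hS => hx.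
have : (0:R) < (hdeg G S)%:R by exact: lt_le_trans hx.
rewrite ltr0n /hdeg cardfs_gt0 => /fset0Pn [e]; rewrite in_fset /= => /andP [eE Se].
by exists e.
Qed.

Lemma hunion_id G : hunion G G = G.
Proof. by case: G => V E; rewrite /hunion /= !fsetUid. Qed.

Lemma lconn_single (k l d : nat) (G : hgraph) : (l < d)%N -> (d <= k)%N ->
  is_kgraph k G -> dcover d G -> (d <= #|`verts G|)%N -> lconnected l G.
Proof.
move=> ld dk kG cG nG; rewrite -(hunion_id G).
apply: (lconn_union (k:=k) (d:=d)) => //.
have := @ext_subset (verts G `&` verts G) d fset0 (fsub0set _) (leq0n _).
rewrite fsetIid => /(_ nG) [U [_ [UV hU]]]; exists U; split => //; by rewrite fsetIid.
Qed.

Lemma binC_ge1 (n d k : nat) : (k <= n)%N -> (1 <= 'C(n - d, k - d))%N.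
Proof. move=> kn; rewrite bin_gt0; lia. Qed.

Lemma fam_pos (R : realType) (k l d n0 : nat) (delta eps : R) G :
  0 <= delta -> 0 < eps -> (k <= n0)%N -> hf_family k l d n0 delta eps G ->
  0 < (delta + eps) * ('C(#|` verts G| - d, k - d))%:R.
Proof.
move=> d0 e0 kn [_ [nG _]].
apply: mulr_gt0; first by apply: lt_le_trans e0 _; rewrite lerDr.
rewrite ltr0n; apply: binC_ge1; lia.
Qed.

Lemma frct_to_hf (R : realType) (k l d : nat) (delta : R) :
  (l < d)%N -> (d <= k)%N -> @frct_admissible R k l d delta -> @hf_admissible R k l d delta.
Proof.
move=> ld dk [hd hf]; split=> // eps e0.
have [n0 hn0] := hf eps e0.
have d0 : 0 <= delta by case/andP: hd.
have kn : (k <= n0 + k + 1)%N by lia.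
exists (n0 + k + 1)%N; exists (fun G => G); split.
  move=> G fG; have pos := fam_pos d0 e0 kn fG.
  case: fG => [kG [nG [_ mG]]].
  have cG := mindeg_cover pos mG.
  have lG : lconnected l G.
    apply: (lconn_single (k:=k) (d:=d)) => //; set a := #|`verts G| in nG *; lia.
  split; first by split=> //; split; exact: fsubset_refl.
  split; last by apply: hn0 => //; lia.
  split; first by split; exact: fsubset_refl.
  split=> // C' [_ sE] _ hE; apply/eqP; by rewrite eqEfsubset sE hE.
move=> H x y kH xV yV fx fy.
have px := fam_pos d0 e0 kn fx.
have py := fam_pos d0 e0 kn fy.
case: fx => [kx [nx [_ mx]]]; case: fy => [ky [ny [_ my]]].
apply: (lconn_union (k:=k) (d:=d)) => //.
- exact: mindeg_cover px mx.
- exact: mindeg_cover py my.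
- set a := #|`verts (del_vertex H x)| in nx *; lia.
- set a := #|`verts (del_vertex H y)| in ny *; lia.
have sub : (verts (del_vertex H x)) `\ y `<=` verts (del_vertex H x) `&` verts (del_vertex H y).
  apply/fsubsetP=> z; rewrite /= !inE.
  by case: (z == y); case: (z == x); case: (z \in verts H).
have hc : (d <= #|`(verts (del_vertex H x)) `\ y|)%N.
  move: (cardfsD1 y (verts (del_vertex H x))).
  set a := #|` verts (del_vertex H x)| in nx *.
  case: (y \in _) => /=; lia.
have [U [_ [UV hU]]] := @ext_subset _ d fset0 (fsub0set _) (leq0n _) hc.
exists U; split => //; exact: fsubset_trans UV sub.
Qed.
Lemma hom_elems (k l : nat) (G : hgraph) (s : seq nat) : (l < k)%N ->
  cycle_hom k l G s -> s != [::] /\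
  forall v, v \in s -> exists2 e, e \in hedges G & v \in e.
Proof.
move=> lk [m [[m0 _] [sz hE]]].
have q0 : (0 < k - l)%N by lia.
split.
  by apply/eqP=> s0; move: sz; rewrite s0 /=; move=> /esym /eqP; rewrite muln_eq0; lia.
move=> v vs.
set j := index v s.
have js : (j < m * (k - l))%N by rewrite -sz index_mem.
set i := (j %/ (k - l))%N.
have im : (i < m)%N by rewrite ltn_divLR.
have wE : cyc_window k l m i \in hedges (lcycle k l m).
  by apply/imfsetP; exists i => //=; rewrite mem_iota; lia.
exists [fset nth 0%N s x | x in cyc_window k l m i]; first exact: hE.
apply/imfsetP; exists j; last by rewrite nth_index.
apply/imfsetP; exists (j %% (k - l))%N => /=.
  rewrite mem_iota add0n; apply: leq_trans (ltn_pmod _ q0) _; lia.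
by rewrite /i -divn_eq modn_small.
Qed.
Lemma part_sum (R : realType) (T : seq (seq nat * R)) (F : seq nat * R -> R) :
  \sum_(p <- T) F p = \sum_(s <- undup (map fst T)) \sum_(p <- T | p.1 == s) F p.
Proof.
apply/esym; under eq_bigr do rewrite big_mkcond /=.
rewrite exchange_big /= big_seq [RHS]big_seq; apply: eq_bigr => p pT.
rewrite -big_mkcond /= big_const_seq /=.
have -> : count (fun s => p.1 == s) (undup (map fst T)) = 1%N.
  rewrite (eq_count (a2 := pred1 p.1)); last by move=> s /=; rewrite eq_sym.
  rewrite count_uniq_mem ?undup_uniq // mem_undup.
  by rewrite map_f.
by rewrite /= addr0.
Qed.
Lemma W_le (R : realType) (T : seq (seq nat * R)) (s : seq nat) (v : nat) :
  (forall p, p \in T -> 0 <= p.2) -> v \in s ->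
  \sum_(p <- T | p.1 == s) p.2 <= \sum_(p <- T) p.2 * (count_mem v p.1)%:R.
Proof.
move=> h vs.
rewrite [X in _ <= X](bigID (fun p => p.1 == s)) /=.
set L := \sum_(p <- T | p.1 == s) p.2.
set A := \sum_(i <- T | i.1 == s) _.
set B := \sum_(i <- T | i.1 != s) _.
have hB : 0 <= B.
  rewrite /B big_seq_cond; apply: sumr_ge0 => q /andP [/h q0 _].
  by apply: mulr_ge0 => //; rewrite ler0n.
have hA : L <= A.
  rewrite /L /A big_seq_cond [X in _ <= X]big_seq_cond; apply: ler_sum => q /andP [qT /eqP qe].
  rewrite qe; apply: ler_peMr; first exact: h q qT.
  by rewrite ler1n -has_count; apply/hasP; exists v => //=.
by apply: le_trans hA _; rewrite lerDl.
Qed.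
Definition wfg (G : hgraph) := forall e, e \in hedges G -> e `<=` verts G.

Lemma merge (R : realType) (k l : nat) (G : hgraph) (T : seq (seq nat * R)) :
  (l < k)%N -> wfg G ->
  (forall p, p \in T -> cycle_hom k l G p.1 /\ 0 <= p.2) ->
  (forall v, v \in verts G -> \sum_(p <- T) p.2 * (count_mem v p.1)%:R = 1) ->
  @perfect_frac_tiling R k l G.
Proof.
move=> lk wf hT hsum.
have h0 : forall p, p \in T -> 0 <= p.2 by move=> p /hT [].
exists [seq (s, \sum_(p <- T | p.1 == s) p.2) | s <- undup (map fst T)].
split.
  have -> : map fst [seq (s, \sum_(p <- T | p.1 == s) p.2) | s <- undup (map fst T)]
      = undup (map fst T).
    by elim: (undup _) => //= a u ->.
  exact: undup_uniq.
split.
  move=> p /mapP [s]; rewrite mem_undup => /mapP [p0 p0T ->] -> /=.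
  have [hom _] := hT p0 p0T.
  split=> //.
  apply/andP; split.
    by rewrite big_seq_cond; apply: sumr_ge0 => q /andP [/h0 ->].
  have [ne hel] := hom_elems lk hom.
  set v := head 0%N p0.1.
  have vs : v \in p0.1 by move: ne; rewrite /v; case: (p0.1) => //= a t _; rewrite mem_head.
  have vV : v \in verts G by have [e eE ve] := hel v vs; exact: (fsubsetP (wf e eE)).
  rewrite -(hsum v vV); exact: W_le.
move=> v vV; apply: eq_trans (hsum v vV); rewrite big_map (part_sum T).
by apply: eq_bigr => s _ /=; rewrite mulr_suml; apply: eq_bigr => p /eqP ->.
Qed.
Lemma hom_sub (k l : nat) (G1 G2 : hgraph) (s : seq nat) :
  hedges G1 `<=` hedges G2 -> cycle_hom k l G1 s -> cycle_hom k l G2 s.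
Proof.
move=> sub [m [hm [sz hE]]]; exists m; split=> //; split=> // e eE.
exact: (fsubsetP sub) (hE e eE).
Qed.

Lemma del_vertex_sub G x : hedges (del_vertex G x) `<=` hedges G.
Proof. by apply/fsubsetP=> e; rewrite /= in_fset /= => /andP []. Qed.

Lemma del_vertex_notin G x e : e \in hedges (del_vertex G x) -> x \notin e.
Proof. by rewrite /= in_fset /= => /andP []. Qed.

Lemma avg1 (R : realType) (k l : nat) (G : hgraph) : (l < k)%N -> wfg G ->
  (2 <= #|`verts G|)%N ->
  (forall x, x \in verts G -> @perfect_frac_tiling R k l (del_vertex G x)) ->
  @perfect_frac_tiling R k l G.
Proof.
move=> lk wf n2 hx.
set c : R := (#|`verts G| - 1)%N%:R.
have c0 : c != 0 by rewrite pnatr_eq0; lia.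
have claim : forall s : seq nat, {subset s <= verts G} -> exists L : seq (seq nat * R),
    (forall p, p \in L -> cycle_hom k l G p.1 /\ 0 <= p.2) /\
    forall v, v \in verts G ->
      \sum_(p <- L) p.2 * (count_mem v p.1)%:R = (count (predC1 v) s)%:R / c.
  elim=> [|x s IH] sV.
    by exists [::]; split=> // v _; rewrite big_nil mul0r.
  have sV' : {subset s <= verts G} by move=> y ys; apply: sV; rewrite inE ys orbT.
  have [L [hL1 hL2]] := IH sV'.
  have xV : x \in verts G by apply: sV; rewrite mem_head.
  have [T [_ [hT1 hT2]]] := hx x xV.
  exists ([seq (p.1, p.2 / c) | p <- T] ++ L); split.
    move=> p; rewrite mem_cat => /orP [/mapP [q qT ->]|/hL1 //] /=.
    have [hq /andP [q0 _]] := hT1 q qT; split; first exact: hom_sub (del_vertex_sub G x) hq.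
    by apply: divr_ge0 => //; rewrite ler0n.
  move=> v vV; rewrite big_cat big_map /= hL2 //=.
  have -> : \sum_(i <- T) i.2 / c * (count_mem v i.1)%:R =
            (\sum_(i <- T) i.2 * (count_mem v i.1)%:R) / c.
    by rewrite mulr_suml; apply: eq_bigr => i _; rewrite mulrAC.
  case: (eqVneq x v) => [xv|xv].
    rewrite -xv /= add0n big1_seq ?mul0r ?add0r // => p /andP [_ pT].
    have [hp _] := hT1 p pT.
    have [_ hel] := hom_elems lk hp.
    suff -> : count_mem x p.1 = 0%N by rewrite mulr0.
    apply/count_memPn; apply/negP => xp; have [e eE xe] := hel x xp.
    by move: (del_vertex_notin eE); rewrite xe.
  rewrite hT2; last by rewrite /= in_fsetD1 eq_sym xv vV.
  by rewrite /= add1n mulrS mulrDl.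
have [L [hL1 hL2]] := claim (verts G) (fun y yV => yV).
apply: (merge lk wf hL1) => v vV.
rewrite hL2 //.
have : count (predC1 v) (verts G) = (#|`verts G| - 1)%N.
  have := count_predC (pred1 v) (verts G).
  rewrite count_uniq_mem ?fset_uniq // vV => <-.
  by rewrite add1n subSS subn0.
by move=> ->; rewrite divff.
Qed.
Definition del_set (G : hgraph) (Rs : {fset nat}) : hgraph :=
  HGraph (verts G `\` Rs) [fset e in hedges G | [disjoint e & Rs]%fset].

Lemma del_set0 G : del_set G fset0 = G.
Proof.
case: G => V E; rewrite /del_set /= fsetD0; congr HGraph.
by apply/fsetP=> e; rewrite in_fset inE /= fdisjointX0 andbT.
Qed.

Lemma del_set_vertex G x Rs : del_set (del_vertex G x) Rs = del_set G (x |` Rs).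
Proof.
rewrite /del_set /del_vertex /=; congr HGraph.
  by apply/fsetP=> z; rewrite !inE; case: (z == x); case: (z \in Rs).
apply/fsetP=> e; rewrite in_fset inE /= in_fset inE /= in_fset inE /= fdisjointXU fdisjointX1.
by case: (e \in hedges G); case: (x \in e).
Qed.

Lemma wfg_del_vertex G x : wfg G -> wfg (del_vertex G x).
Proof.
move=> wf e /= ; rewrite in_fset /= => /andP [eE xe].
apply/fsubsetP=> z ze; rewrite in_fsetD1 (fsubsetP (wf e eE) z ze) andbT.
by apply/eqP=> zx; move: xe; rewrite -zx ze.
Qed.

Lemma avgB (R : realType) (k l : nat) : (l < k)%N -> forall r G, wfg G ->
  (r < #|`verts G|)%N ->
  (forall Rs, Rs `<=` verts G -> #|`Rs| = r -> @perfect_frac_tiling R k l (del_set G Rs)) ->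
  @perfect_frac_tiling R k l G.
Proof.
move=> lk; elim=> [|r IH] G wf rn h.
  by rewrite -(del_set0 G); apply: h; [exact: fsub0set | exact: cardfs0].
have n2 : (2 <= #|`verts G|)%N by move: rn; set a := #|`verts G|; lia.
apply: (avg1 lk wf n2).
move=> x xV; apply: IH.
- exact: wfg_del_vertex wf.
- move: (cardfsD1 x (verts G)); rewrite xV /=.
  set a := #|`verts G| in rn *; set b := #|`verts G `\ x|; lia.
- move=> Rs RsV hRs; rewrite del_set_vertex; apply: h.
  by rewrite fsubUset fsub1set xV; apply: fsubset_trans RsV (fsubsetDl _ _).
have xRs : x \notin Rs by apply/negP=> /(fsubsetP RsV); rewrite in_fsetD1 eqxx.
by rewrite cardfsU1 xRs hRs.
Qed.
Lemma cardU_le (A B : {fset {fset nat}}) : (#|`A `|` B| <= #|`A| + #|`B|)%N.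
Proof. have := cardfsUI A B; lia. Qed.

Lemma fam_count : forall (n : nat) (W : {fset nat}) (F : {fset {fset nat}}) (j : nat),
  #|`W| = n -> (forall A, A \in F -> A `<=` W /\ #|`A| = j) -> (#|`F| <= 'C(n, j))%N.
Proof.
elim=> [|n IH] W F [|j] hW hF.
- have : F `<=` [fset fset0].
    apply/fsubsetP=> A AF; have [_ hA] := hF A AF.
    by rewrite in_fset1; apply/eqP; apply: cardfs0_eq.
  by move/fsubset_leq_card; rewrite cardfs1 bin0.
- suff -> : F = fset0 by rewrite cardfs0.
  apply/fsetP=> A; rewrite in_fset0; apply/negP=> AF.
  have [AW hA] := hF A AF; move: (fsubset_leq_card AW); by rewrite hW hA ltn0.
- have : F `<=` [fset fset0].
    apply/fsubsetP=> A AF; have [_ hA] := hF A AF.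
    by rewrite in_fset1; apply/eqP; apply: cardfs0_eq.
  by move/fsubset_leq_card; rewrite cardfs1 bin0.
have [w wW] : exists w, w \in W.
  by apply/fset0Pn; rewrite -cardfs_gt0 hW.
set W' := W `\ w.
have hW' : #|`W'| = n by move: (cardfsD1 w W); rewrite wW hW /W'; lia.
set F1 := [fset A in F | w \in A].
set F2 := [fset A in F | w \notin A].
have FU : F `<=` F1 `|` F2.
  apply/fsubsetP=> A AF; rewrite in_fsetU /F1 /F2 !in_fset !inE /= AF /=.
  by case: (w \in A).
have h2 : (#|`F2| <= 'C(n, j.+1))%N.
  apply: (IH W') => // A; rewrite /F2 in_fset inE /= => /andP [AF wA].
  have [AW hA] := hF A AF; split=> //.
  by rewrite fsubsetD1 AW wA.
have h1 : (#|`F1| <= 'C(n, j))%N.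
  have inj : {in F1 &, injective (fun A : {fset nat} => A `\ w)}.
    move=> A B; rewrite /F1 !in_fset !inE /= => /andP [_ wA] /andP [_ wB] e.
    by rewrite -(fsetD1K wA) -(fsetD1K wB) e.
  move/card_in_imfsetP: inj => /eqP <-.
  apply: (IH W') => // A /imfsetP [B]; rewrite /F1 in_fset inE /= => /andP [BF wB] ->.
  have [BW hB] := hF B BF; split.
    by rewrite /W'; apply: fsetSD.
  by move: (cardfsD1 w B); rewrite wB hB /= => -[->].
rewrite binS; apply: leq_trans (fsubset_leq_card FU) _.
apply: leq_trans (cardU_le _ _) _; lia.
Qed.
Lemma hdeg_bound (k d : nat) (G : hgraph) (T : {fset nat}) : is_kgraph k G ->
  T `<=` verts G -> #|`T| = d.+1 -> (d.+1 <= k)%N ->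
  (hdeg G T <= 'C(#|`verts G| - d.+1, k - d.+1))%N.
Proof.
move=> kG TV hT dk.
set F := [fset e in hedges G | T `<=` e].
have inj : {in F &, injective (fun e : {fset nat} => e `\` T)}.
  move=> e f; rewrite /F !in_fset !inE /= => /andP [_ Te] /andP [_ Tf] ef.
  apply/fsetP=> z; case zT: (z \in T).
    by rewrite (fsubsetP Te z zT) (fsubsetP Tf z zT).
  have : (z \in e `\` T) = (z \in f `\` T) by rewrite ef.
  by rewrite !in_fsetD zT.
rewrite /hdeg -/F; move/card_in_imfsetP: inj => /eqP <-.
apply: (fam_count (W := verts G `\` T)); first by rewrite cardfsDS // hT.
move=> A /imfsetP [e]; rewrite /F in_fset inE /= => /andP [eE Te] ->.
have [eV he] := kG e eE; split; first exact: fsetSD.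
by rewrite cardfsDS // he hT.
Qed.

Lemma cover_count (G : hgraph) (S : {fset nat}) : forall (s : seq nat) (D : {fset {fset nat}}),
  (forall e, e \in D -> e \in hedges G /\ exists2 x, x \in s & x |` S `<=` e) ->
  (#|`D| <= \sum_(x <- s) hdeg G (x |` S))%N.
Proof.
elim=> [|x s IH] D hD.
  rewrite big_nil leqn0 cardfs_eq0; apply/eqP/fsetP=> e; rewrite in_fset0.
  by apply/negP=> /hD [_ [y]].
rewrite big_cons.
set D1 := [fset e in hedges G | x |` S `<=` e].
have sub : D `<=` D1 `|` (D `\` D1).
  by apply/fsubsetP=> e eD; rewrite in_fsetU in_fsetD eD andbT orbN.
apply: leq_trans (fsubset_leq_card sub) _.
apply: leq_trans (cardU_le _ _) _; apply: leq_add => //.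
apply: IH => e; rewrite in_fsetD => /andP [eD1 eD]; have [eE [y ys Se]] := hD e eD.
split=> //; exists y => //; move: ys; rewrite inE => /orP [/eqP yx|//].
by move: eD1; rewrite /D1 in_fset inE /= eE -yx Se.
Qed.
Lemma inSep (A : {fset {fset nat}}) (P : pred {fset nat}) x :
  (x \in [fset y in A | P y]) = (x \in A) && P x.
Proof. by rewrite in_fset inE. Qed.

Lemma deg_del (k d : nat) (G : hgraph) (Rs S : {fset nat}) : is_kgraph k G ->
  Rs `<=` verts G -> S `<=` verts G `\` Rs -> #|`S| = d -> (d.+1 <= k)%N ->
  (hdeg G S <= hdeg (del_set G Rs) S + #|`Rs| * 'C(#|`verts G| - d.+1, k - d.+1))%N.
Proof.
move=> kG RV SV hS dk.
set D := [fset e in hedges G | S `<=` e & ~~ [disjoint e & Rs]%fset].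
have sub : [fset e in hedges G | S `<=` e] `<=`
           [fset e in hedges (del_set G Rs) | S `<=` e] `|` D.
  apply/fsubsetP=> e; rewrite in_fsetU /D !inSep /= ?inSep.
  by case: (e \in hedges G); case: (S `<=` e); case: ([disjoint e & Rs]%fset).
rewrite /hdeg; apply: leq_trans (fsubset_leq_card sub) _.
apply: leq_trans (cardU_le _ _) _; rewrite leq_add2l.
apply: leq_trans (cover_count (G := G) (S := S) (s := Rs) (D := D) _) _.
  move=> e; rewrite /D inSep => /andP [eE /andP [Se]].
  rewrite -fsetI_eq0 => /fset0Pn [y]; rewrite in_fsetI => /andP [ye yR].
  by split=> //; exists y => //; rewrite fsubUset fsub1set ye Se.
have -> : (#|`Rs| * 'C(#|`verts G| - d.+1, k - d.+1) =
    \sum_(x <- Rs) 'C(#|`verts G| - d.+1, k - d.+1))%N.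
  by rewrite big_const_seq iter_addn addn0 count_predT mulnC.
rewrite big_seq [X in (_ <= X)%N]big_seq; apply: leq_sum => x xR.
apply: (hdeg_bound (d := d)) => //.
  rewrite fsubUset fsub1set (fsubsetP RV x xR) /=.
  by apply: fsubset_trans SV (fsubsetDl _ _).
have xS : x \notin S.
  by apply/negP=> /(fsubsetP SV); rewrite in_fsetD xR.
by rewrite cardfsU1 xS hS.
Qed.
Lemma tiling_sub (R : realType) (k l : nat) (F G : hgraph) :
  verts F = verts G -> hedges F `<=` hedges G ->
  @perfect_frac_tiling R k l F -> @perfect_frac_tiling R k l G.
Proof.
move=> hV hE [T [u [h1 h2]]]; exists T; split=> //; split.
  by move=> p /h1 [hp hw]; split=> //; exact: hom_sub hE hp.
by move=> v; rewrite -hV; exact: h2.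
Qed.

Lemma exists_nat_gt (R : realType) (x : R) : exists M : nat, x < M%:R.
Proof. by exists (Num.truncn x).+1; exact: truncnS_gt. Qed.

Lemma ratio_bound (R : realType) (r a N C C' : R) (e : R) :
  0 < N -> 0 <= C -> 0 <= C' -> N * C' = a * C -> r * a <= e / 2 * N ->
  r * C' <= e / 2 * C.
Proof.
move=> N0 C0 C'0 hN hr.
rewrite -(ler_pM2l N0).
have -> : N * (r * C') = (r * a) * C by rewrite mulrCA hN mulrA.
have -> : N * (e / 2 * C) = (e / 2 * N) * C by rewrite mulrA [N * _]mulrC.
exact: ler_wpM2r.
Qed.
Lemma hf_to_frct (R : realType) (k l d : nat) (delta : R) :
  (1 <= l)%N -> (l < d)%N -> (d <= k - 1)%N ->
  @hf_admissible R k l d delta -> @frct_admissible R k l d delta.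
Proof.
move=> l1 ld dk [hd hhf]; split=> // eps e0.
have d0 : 0 <= delta by case/andP: hd.
have e20 : 0 < eps / 2 by rewrite divr_gt0.
have [n0 [F [hF _]]] := hhf (eps / 2) e20.
have [M hM] := exists_nat_gt (((k - l) * (k - d))%N%:R / (eps / 2)).
exists (n0 + (k - l) + d + M)%N => G kG nG mG.
have [n hn] : exists n, #|`verts G| = n by eexists.
rewrite hn in nG mG.
have lk : (l < k)%N by lia.
have q0 : (0 < k - l)%N by lia.
have wf : wfg G by move=> e /kG [].
have rq : (n %% (k - l) < k - l)%N by rewrite ltn_pmod.
apply: (avgB lk (r := (n %% (k - l))%N) wf); first by rewrite hn; lia.
move=> Rs RsV hRs.
have nG' : #|`verts (del_set G Rs)| = (n - n %% (k - l))%N by rewrite /= cardfsDS // hRs hn.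
have fam : hf_family k l d n0 delta (eps / 2) (del_set G Rs).
  split.
    move=> e; rewrite /= inSep => /andP [eE dis]; have [eV he] := kG e eE; split => //.
    apply/fsubsetP => z ze; rewrite in_fsetD (fsubsetP eV z ze) andbT.
    by move/fdisjointP: dis => /(_ z ze).
  split; first by rewrite nG'; lia.
  split; first by rewrite nG' {1}(divn_eq n (k - l)) addnK dvdn_mull.
  move=> S SV hS.
  have dk1 : (d.+1 <= k)%N by lia.
  have hdl := deg_del kG RsV SV hS dk1.
  have hm := mG S (fsubset_trans SV (fsubsetDl _ _)) hS.
  rewrite hn hRs in hdl; rewrite nG'.
  set C := 'C(n - d, k - d) in hm *.
  set C' := 'C(n - d.+1, k - d.+1) in hdl.
  set C0 := 'C(n - n %% (k - l) - d, k - d).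
  set r := (n %% (k - l))%N in hdl rq *.
  have hC0 : (C0 <= C)%N by apply: leq_bin2l; lia.
  have hdlR : (hdeg G S)%:R <= (hdeg (del_set G Rs) S)%:R + r%:R * C'%:R :> R.
    by rewrite -natrM -natrD ler_nat.
  have diag : ((n - d) * C' = (k - d) * C)%N.
    rewrite /C' /C !subnS.
    have -> : (k - d = (k - d).-1.+1)%N by lia.
    by rewrite mul_bin_diag; congr (_ * 'C(_, _))%N; lia.
  have hb : r%:R * C'%:R <= eps / 2 * C%:R :> R.
    apply: (ratio_bound (N := (n - d)%N%:R) (a := (k - d)%N%:R)).
    - rewrite ltr0n; lia.
    - exact: ler0n.
    - exact: ler0n.
    - by rewrite -!natrM diag.
    - have h1 : ((r * (k - d))%N%:R : R) <= ((k - l) * (k - d))%N%:R.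
        by rewrite ler_nat leq_mul2r; apply/orP; right; exact: ltnW.
      have h2 : ((k - l) * (k - d))%N%:R < M%:R * (eps / 2) :> R.
        by rewrite -ltr_pdivrMr.
      have h3 : (M%:R : R) <= (n - d)%N%:R by rewrite ler_nat; lia.
      have h4 : M%:R * (eps / 2) <= (n - d)%N%:R * (eps / 2) :> R.
        by apply: ler_wpM2r => //; exact: ltW.
      rewrite -natrM; lra.
  have hC0R : (delta + eps / 2) * C0%:R <= (delta + eps / 2) * C%:R.
    by apply: ler_wpM2l; [lra | rewrite ler_nat].
  lra.
have [[[_ hsub] hV] [_ tF]] := hF _ fam.
exact: tiling_sub hV hsub tF.
Qed.

From Stdlib Require Import FunctionalExtensionality PropExtensionality.

Theorem proposition2p10 (R : realType) (k l d : nat) :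
  (1 <= l)%N -> (l < d)%N -> (d <= k - 1)%N -> ~~ ((k - l) %| k)%N ->
  hf_threshold R k l d = frct_threshold R k l d.
Proof.
move=> l1 ld dk _.
rewrite /hf_threshold /frct_threshold; congr inf.
apply: functional_extensionality => delta; apply: propositional_extensionality.
split; first exact: hf_to_frct.
apply: frct_to_hf => //; lia.
Qed.
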